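(* Let $\alpha=(\alpha_1,\dots,\alpha_t)$ be palindromic (i.e. $\alpha_i=\alpha_{t+1-i}$ for all $i$) with $t$ odd, let $F=\breve F(\alpha)$ with elements $x_1,\dots,x_n$ and shared elements $s_1,\dots,s_{t-1}$. Assume that $\hat\chi_{s_i}+\hat\chi_{s_{t-i}}$ is $1$-mesic under rowmotion for all $i\in[t-1]$. Then (1) $\hat\chi_{x_k}+\hat\chi_{x_{n-k+1}}$ is $1$-mesic for all $k\in[n]$, and (2) $\chi_{x_k}-\chi_{x_{n-k+1}}$ is $0$-mesic for all $k\in[n]$.
   Context: A fence $\breve F(\alpha_1,\dots,\alpha_t)$ ($t\ge2$, positive integers, $\alpha_1,\alpha_t\ge2$) is the poset on $\{x_1,\dots,x_n\}$, $n=\alpha_1+\dots+\alpha_t-1$, with $a_i=\alpha_1+\dots+\alpha_i$, $a_0=0$, whose cover relations are: for $1\le j\le n-1$ with $a_{i-1}\le j<a_i$, $x_j\lessdot x_{j+1}$ if $i$ odd and $x_j\gtrdot x_{j+1}$ if $i$ even. Shared elements: $s_i=x_{a_i}$. $\mathcal J(F)$ is the set of order ideals; rowmotion $\rho$ sends $I$ to the order ideal generated by $\min(F\setminus I)$. $\hat\chi_q(I)=1$ if $q\in I$, else 0; $\chi_q(I)=1$ if $q\in\max(I)$, else 0. A statistic $f:\mathcal J(F)\to\mathbb R$ is $c$-mesic under rowmotion if its average over every $\rho$-orbit equals $c$. *)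

(* Defs.v *)
From mathcomp Require Import all_boot all_order all_algebra.
Unset Printing Implicit Defensive.
Import GRing.Theory Num.Theory.
Local Open Scope ring_scope.

(* Fence F(alpha_1,...,alpha_t), alpha : seq nat with size alpha = t.
   Elements x_1..x_n are represented by 'I_n, x_j <-> ordinal j-1. *)

Definition psum (alpha : seq nat) (i : nat) : nat := (\sum_(k < i) nth 0 alpha k)%N.

Definition fsize (alpha : seq nat) : nat := (\sum_(a <- alpha) a).-1.

(* for 1 <= j <= n-1: the index i with a_{i-1} <= j < a_i satisfies
   i - 1 = #{ i' in [1,t] | a_{i'} <= j }; up j <=> i odd <=> x_j covered by x_{j+1} *)
Definition up (alpha : seq nat) (j : nat) : bool :=
  ~~ odd (count (fun i => psum alpha i <= j)%N (iota 1 (size alpha))).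

(* cover relation: cov u v <=> u is covered by v *)
Definition cov (alpha : seq nat) : rel 'I_(fsize alpha) :=
  fun u v => ((v == u.+1 :> nat) && up alpha u.+1)
          || ((u == v.+1 :> nat) && ~~ up alpha v.+1).

Definition fle (alpha : seq nat) : rel 'I_(fsize alpha) := connect (cov alpha).
Definition flt (alpha : seq nat) (u v : 'I_(fsize alpha)) : bool :=
  (u != v) && fle alpha u v.

Definition is_ideal (alpha : seq nat) (I : {set 'I_(fsize alpha)}) : bool :=
  [forall x, forall y, ((y \in I) && fle alpha x y) ==> (x \in I)].

Definition min_compl (alpha : seq nat) (I : {set 'I_(fsize alpha)}) :=
  [set m | (m \notin I) && [forall y, (y \notin I) ==> ~~ flt alpha y m]].

Definition rowmotion (alpha : seq nat) (I : {set 'I_(fsize alpha)})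
  : {set 'I_(fsize alpha)} :=
  [set x | [exists m in min_compl alpha I, fle alpha x m]].

Definition maxel (alpha : seq nat) (I : {set 'I_(fsize alpha)}) :=
  [set m in I | [forall y in I, ~~ flt alpha m y]].

(* hatchi_{x_q}(I), chi_{x_q}(I), with q a 1-based position *)
Definition hatchi (alpha : seq nat) (q : nat) (I : {set 'I_(fsize alpha)}) : rat :=
  ([exists x in I, x.+1 == q] : nat)%:R.
Definition chi (alpha : seq nat) (q : nat) (I : {set 'I_(fsize alpha)}) : rat :=
  ([exists x in maxel alpha I, x.+1 == q] : nat)%:R.

Definition rorbit (alpha : seq nat) (I : {set 'I_(fsize alpha)}) :=
  [set J | fconnect (rowmotion alpha) I J].

Definition mesic (alpha : seq nat) (f : {set 'I_(fsize alpha)} -> rat) (c : rat) : Prop :=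
  forall I : {set 'I_(fsize alpha)}, is_ideal alpha I ->
    (\sum_(J in rorbit alpha I) f J) / (#|rorbit alpha I|%:R) = c.

Definition palindromic (alpha : seq nat) : Prop :=
  forall i, (i < size alpha)%N -> nth 0 alpha i = nth 0 alpha (size alpha - 1 - i).

Definition fence_params (alpha : seq nat) : Prop :=
  [/\ (2 <= size alpha)%N, all (fun a => 0 < a)%N alpha,
      (2 <= head 0 alpha)%N & (2 <= last 0 alpha)%N].

(* Main.v *)
Require Import Defs.
From mathcomp Require Import all_boot all_order all_algebra.
From mathcomp Require Import zify ring lra.
Import GRing.Theory Num.Theory.
Set Implicit Arguments. Unset Strict Implicit. Unset Printing Implicit Defensive.

Section Poset.
Variable alpha : seq nat.
Local Notation n := (fsize alpha).
Local Notation T := 'I_(fsize alpha).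
Local Notation cov := (cov alpha).
Local Notation fle := (fle alpha).
Local Notation flt := (flt alpha).
Local Notation up := (up alpha).

Lemma connect_first (e : rel T) x y : connect e x y -> x = y \/ exists2 z, e x z & connect e z y.
Proof.
move/connectP=> [[|z p]] /= => [_ ->|/andP[exz pz] ->]; first by left.
by right; exists z => //; apply/connectP; exists p.
Qed.

Lemma connect_last (e : rel T) x y : connect e x y -> x = y \/ exists2 z, connect e x z & e z y.
Proof.
move/connectP=> [p]; elim/last_ind: p => [_ ->|p z _]; first by left.
rewrite rcons_path last_rcons => /andP[px ez] ->; right; exists (last x p) => //.
by apply/connectP; exists p.
Qed.

Lemma covP (u v : T) : cov u v = ((v == u.+1 :> nat) && up u.+1) || ((u == v.+1 :> nat) && ~~ up v.+1).
Proof. by []. Qed.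

Lemma path_up p (u : T) : path cov u p -> forall k, (u <= k < last u p)%N -> up k.+1.
Proof.
elim: p u => [|z p IH] u /=; first by move=> _ k; lia.
move=> /andP[c pz] k hk; move: c; rewrite covP => /orP[/andP[/eqP zu hu]|/andP[/eqP uz _]].
  have [ek|nk] := eqVneq k u; first by rewrite ek.
  by apply: (IH z pz); move: hk; rewrite zu; move/eqP: nk => nk; lia.
by apply: (IH z pz); move: hk; rewrite uz; lia.
Qed.

Lemma path_down p (u : T) : path cov u p -> forall k, (last u p <= k < u)%N -> ~~ up k.+1.
Proof.
elim: p u => [|z p IH] u /=; first by move=> _ k; lia.
move=> /andP[c pz] k hk; move: c; rewrite covP => /orP[/andP[/eqP zu _]|/andP[/eqP uz hu]].
  by apply: (IH z pz); move: hk; rewrite zu; lia.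
have [ek|nk] := eqVneq k z; first by rewrite ek.
by apply: (IH z pz); move: hk; rewrite uz; move/eqP: nk => nk; lia.
Qed.

Lemma fle_up (u v : T) k : fle u v -> (u <= k < v)%N -> up k.+1.
Proof. by move/connectP=> [p pp ->]; apply: path_up. Qed.

Lemma fle_down (u v : T) k : fle u v -> (v <= k < u)%N -> ~~ up k.+1.
Proof. by move/connectP=> [p pp ->]; apply: path_down. Qed.

Lemma fle_refl (u : T) : fle u u.
Proof. exact: connect0. Qed.

Lemma fle_trans (u v w : T) : fle u v -> fle v w -> fle u w.
Proof. exact: connect_trans. Qed.

Lemma cov_fle (u v : T) : cov u v -> fle u v.
Proof. exact: connect1. Qed.

Lemma fle_anti (u v : T) : fle u v -> fle v u -> u = v.
Proof.
move=> h1 h2; have [lt|gt|eq] := ltngtP u v; last exact: val_inj.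
  have := fle_down (k:=u) h2; rewrite (fle_up (k:=u) h1) ?leqnn ?lt //.
  by move/(_ isT).
have := fle_down (k:=v) h1; rewrite (fle_up (k:=v) h2) ?leqnn ?gt //.
by move/(_ isT).
Qed.

Local Notation rho := (rowmotion alpha).
Local Notation M := (min_compl alpha).
Implicit Types (J A B : {set T}) (x y m : T).

Lemma in_rho J x : (x \in rho J) = [exists m in M J, fle x m].
Proof. by rewrite inE. Qed.

Lemma in_M J m : (m \in M J) = (m \notin J) && [forall y, (y \notin J) ==> ~~ flt y m].
Proof. by rewrite inE. Qed.

Lemma in_rhoP J x : reflect (exists2 m, m \in M J & fle x m) (x \in rho J).
Proof. rewrite in_rho; apply: (iffP existsP) => [[m /andP[]]|[m h1 h2]]; [by exists m|by exists m; rewrite h1]. Qed.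

Lemma MP J m : reflect (m \notin J /\ forall y, y \notin J -> fle y m -> y = m) (m \in M J).
Proof.
rewrite in_M; apply: (iffP andP) => [[h /forallP h2]|[h h2]]; split => //.
  move=> y yJ ym; have := h2 y; rewrite yJ /= /flt ym andbT negbK => /eqP //.
by apply/forallP => y; apply/implyP => yJ; rewrite /flt negb_and negbK; case: (boolP (fle y m)) => [/(h2 y yJ) ->|]; rewrite ?eqxx ?orbT.
Qed.

Lemma M_notin J m : m \in M J -> m \notin J.
Proof. by case/MP. Qed.

Lemma M_sub_rho J m : m \in M J -> m \in rho J.
Proof. by move=> h; apply/in_rhoP; exists m => //; apply: fle_refl. Qed.

Lemma rho_ideal J : is_ideal alpha (rho J).
Proof.
apply/forallP => x; apply/forallP => y; apply/implyP => /andP[/in_rhoP[m hm ym] xy].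
by apply/in_rhoP; exists m => //; apply: fle_trans xy ym.
Qed.

Lemma idealP J : is_ideal alpha J -> forall x y, y \in J -> fle x y -> x \in J.
Proof. by move=> /forallP h x y yJ xy; have /forallP/(_ y) := h x; rewrite yJ xy. Qed.

Lemma maxel_rho J : maxel alpha (rho J) = M J.
Proof.
apply/setP => x; rewrite inE; apply/andP/idP => [[/in_rhoP[m hm xm] /forallP h]|hx].
  have [exm|nxm] := eqVneq x m; first by rewrite exm.
  by have := h m; rewrite M_sub_rho //= /flt nxm xm.
split; first exact: M_sub_rho.
apply/forallP => y; apply/implyP => /in_rhoP[m hm ym]; apply/negP => /andP[nxy xy].
case/MP: hm => mJ hm; case/MP: hx => xJ hx.
have xm : fle x m by apply: fle_trans xy ym.
have exm := hm x xJ xm; rewrite -exm in ym.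
by move/eqP: nxy; apply; apply: fle_anti.
Qed.

Lemma exists_M J x : x \notin J -> exists2 m, m \in M J & fle m x.
Proof.
move: {2}#|[set z | fle z x]| (leqnn #|[set z | fle z x]|) => k.
elim: k x => [|k IH] x hk xJ.
  move: hk; rewrite leqn0 => /eqP/cards0_eq/setP/(_ x); rewrite !inE fle_refl.
  discriminate.
have [hx|hx] := boolP (x \in M J); first by exists x => //; apply: fle_refl.
have [y yJ [yx nyx]] : exists2 y, y \notin J & (fle y x /\ y != x).
  move: hx; rewrite in_M xJ /= negb_forall => /existsP[y].
  by rewrite negb_imply negbK /flt => /andP[yJ /andP[nyx yx]]; exists y.
have sub : [set z | fle z y] \proper [set z | fle z x].
  apply/properP; split.
    by apply/subsetP => z; rewrite !inE => zy; apply: fle_trans zy yx.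
  exists x; rewrite !inE ?fle_refl //; apply/negP => xy.
  by move/eqP: nyx; apply; apply: fle_anti.
have [m hm my] := IH y (leq_trans (proper_card sub) hk) yJ.
by exists m => //; apply: fle_trans my yx.
Qed.

Lemma rho_inj J1 J2 : is_ideal alpha J1 -> is_ideal alpha J2 -> rho J1 = rho J2 -> J1 = J2.
Proof.
move=> i1 i2 e.
have sub : forall A B, is_ideal alpha A -> is_ideal alpha B -> rho A = rho B -> A \subset B.
  move=> A B iA iB eAB; apply/subsetP => x xA; apply/negPn/negP => xB.
  have [m hm mx] := exists_M xB.
  have mA : m \in A by apply: (idealP iA xA mx).
  have : m \in M A by rewrite -maxel_rho eAB maxel_rho.
  by move/M_notin; rewrite mA.
by apply/eqP; rewrite eqEsubset !sub //.
Qed.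

Definition rho' J := if is_ideal alpha J then rho J else J.

Lemma rho'_inj : injective rho'.
Proof.
move=> J1 J2; rewrite /rho'.
case: (boolP (is_ideal alpha J1)) => i1; case: (boolP (is_ideal alpha J2)) => i2.
- exact: rho_inj.
- by move=> e; move: i2; rewrite -e rho_ideal.
- by move=> e; move: i1; rewrite e rho_ideal.
- by [].
Qed.

Lemma iter_rho I k : is_ideal alpha I -> iter k rho' I = iter k rho I /\ is_ideal alpha (iter k rho I).
Proof.
move=> iI; elim: k => [|k [IH1 IH2]] //=.
by rewrite IH1 /rho' IH2 rho_ideal.
Qed.

Lemma rorbitE I : is_ideal alpha I -> rorbit alpha I = [set J | fconnect rho' I J].
Proof.
move=> iI; apply/setP => J; rewrite !inE; apply/idP/idP => h.
  by rewrite -(iter_findex h) -(iter_rho _ iI).1 fconnect_iter.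
by rewrite -(iter_findex h) (iter_rho _ iI).1 fconnect_iter.
Qed.

Lemma orbit_ideal I J : is_ideal alpha I -> J \in rorbit alpha I -> is_ideal alpha J.
Proof.
move=> iI; rewrite inE => h.
by rewrite -(iter_findex h); exact: (iter_rho _ iI).2.
Qed.

Lemma I_in_orbit I : I \in rorbit alpha I.
Proof. by rewrite inE connect0. Qed.

Lemma sum_rho (F : {set T} -> rat) I : is_ideal alpha I ->
  (\sum_(J in rorbit alpha I) F (rho J) = \sum_(J in rorbit alpha I) F J)%R.
Proof.
move=> iI; rewrite [RHS](reindex_inj rho'_inj) /=.
apply: eq_big => J.
  by rewrite (rorbitE iI) !inE -same_fconnect1_r //; exact: rho'_inj.
by move=> hJ; rewrite /rho' (orbit_ideal iI hJ).
Qed.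

Local Open Scope ring_scope.
Lemma cov_neq x y : cov x y -> x != y.
Proof. by rewrite covP => /orP[]/andP[/eqP h _]; apply/eqP => e; move: h; rewrite e; lia. Qed.

Definition hb J p := [exists x in J, x.+1 == p].

Lemma hb_ord J x : hb J x.+1 = (x \in J).
Proof.
apply/existsP/idP => [[y /andP[yJ /eqP e]]|xJ]; last by exists x; rewrite xJ eqxx.
by have <- : y = x by apply: val_inj; move: e => /=; lia.
Qed.

Lemma hb_ordP J p : reflect (exists2 x, x \in J & val x = p.-1 /\ (0 < p)%N) (hb J p).
Proof.
apply: (iffP existsP) => [[y /andP[yJ /eqP e]]|[x xJ [e hp]]].
  by exists y => //; rewrite -e; split.
by exists x; rewrite xJ /=; apply/eqP; move: e hp => /=; lia.
Qed.

Lemma hb0 J : hb J 0 = false.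
Proof. by apply/hb_ordP => -[x _ []]. Qed.

Lemma hb_big J p : (n < p)%N -> hb J p = false.
Proof. by move=> hp; apply/hb_ordP => -[x _ [e _]]; have := ltn_ord x; rewrite e; lia. Qed.

Lemma hatchiE J p : hatchi alpha p J = (hb J p : nat)%:R.
Proof. by []. Qed.

Lemma chiE J p : chi alpha p J = (hb (maxel alpha J) p : nat)%:R.
Proof. by []. Qed.

Lemma UN J x w : (forall y, cov x y = (val y == w)) ->
  hb (rho J) x.+1 = (x \in M J) || hb (rho J) w.+1 /\ ~~ ((x \in M J) && hb (rho J) w.+1).
Proof.
move=> hc; rewrite hb_ord; split.
  apply/in_rhoP/orP => [[m hm xm]|[hx|/hb_ordP[y yR [ey _]]]].
  - case: (connect_first xm) => [e|[y xy ym]]; first by left; rewrite e.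
    right; apply/hb_ordP; exists y; last by split => //; move: (hc y); rewrite xy => /esym/eqP.
    by apply/in_rhoP; exists m.
  - by exists x => //; apply: fle_refl.
  - case/in_rhoP: yR => m hm ym; exists m => //; apply: fle_trans ym.
    by apply: cov_fle; rewrite hc ey /= eqxx.
apply/andP => -[hx /hb_ordP[y /in_rhoP[m hm ym] [ey _]]].
have cxy : cov x y by rewrite hc ey /= eqxx.
case/MP: hm => mJ hm; case/MP: (hx) => xJ _.
have xm := fle_trans (cov_fle cxy) ym.
have exm := hm x xJ xm; rewrite -exm in ym.
by move/eqP: (cov_neq cxy); apply; apply: fle_anti => //; apply: cov_fle.
Qed.

Lemma UNr J x w : (forall y, cov x y = (val y == w)) ->
  hatchi alpha x.+1 (rho J) = (x \in M J)%:R + hatchi alpha w.+1 (rho J).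
Proof.
move=> /(UN J) [e1 e2]; rewrite !hatchiE e1.
by move: e2; case: (x \in M J); case: (hb _ _).
Qed.

Lemma LN1b J x w : is_ideal alpha J -> (w < n)%N -> (forall y, cov y x = (val y == w)) ->
  (x \in M J) = (x \notin J) && hb J w.+1.
Proof.
move=> iJ hw hc; pose z := Ordinal hw.
have czx : cov z x by rewrite hc eqxx.
apply/idP/andP => [hx|[xJ /hb_ordP[y yJ [ey _]]]].
  case/MP: (hx) => xJ hm; split => //; rewrite -[w]/(val z) hb_ord.
  apply/negPn/negP => zJ; have := hm z zJ (cov_fle czx).
  by move=> e; move: (cov_neq czx); rewrite e eqxx.
apply/MP; split => // y' y'J y'x.
case: (connect_last y'x) => [//|[z' y'z' cz'x]].
have ez' : z' = y by apply: val_inj; rewrite ey /=; apply/eqP; rewrite -hc.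
have := idealP iJ (x:=y') yJ; rewrite -ez' => /(_ y'z').
by rewrite (negbTE y'J).
Qed.

Lemma LN1 J x w : is_ideal alpha J -> (w < n)%N -> (forall y, cov y x = (val y == w)) ->
  (x \in M J)%:R = hatchi alpha w.+1 J - hatchi alpha x.+1 J :> rat.
Proof.
move=> iJ hw hc; rewrite (LN1b iJ hw hc) !hatchiE hb_ord.
pose z := Ordinal hw.
have czx : cov z x by rewrite hc eqxx.
case: (boolP (x \in J)) => xJ /=.
  by rewrite -[w]/(val z) hb_ord (idealP iJ xJ (cov_fle czx)) subrr.
by rewrite subr0.
Qed.

Lemma LN0b J x : (forall y, cov y x = false) -> (x \in M J) = (x \notin J).
Proof.
move=> hc; apply/idP/idP => [/MP[]//|xJ]; apply/MP; split => // y' _ y'x.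
by case: (connect_last y'x) => [//|[z' _]]; rewrite hc.
Qed.

Lemma LN0 J x : (forall y, cov y x = false) ->
  (x \in M J)%:R = 1 - hatchi alpha x.+1 J :> rat.
Proof. by move=> hc; rewrite (LN0b J hc) hatchiE hb_ord; case: (x \in J). Qed.

Lemma peak J x : (forall y, cov x y = false) -> (x \in maxel alpha J) = (x \in J).
Proof.
move=> hc; rewrite inE; apply: andb_idr => xJ; apply/forallP => y; apply/implyP => _.
apply/negP => /andP[nxy xy]; case: (connect_first xy) => [e|[z]]; last by rewrite hc.
by move: nxy; rewrite e eqxx.
Qed.

Lemma chi_rho J x : chi alpha x.+1 (rho J) = (x \in M J)%:R.
Proof. by rewrite chiE hb_ord maxel_rho. Qed.

Lemma chi_peak J x : (forall y, cov x y = false) -> chi alpha x.+1 J = hatchi alpha x.+1 J.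
Proof. by move=> hc; rewrite chiE hatchiE !hb_ord peak. Qed.

End Poset.
Section Arith.
Variable alpha : seq nat.
Hypothesis hfp : fence_params alpha.
Hypothesis hpal : palindromic alpha.
Hypothesis hodd : odd (size alpha).
Local Notation n := (fsize alpha).
Local Notation t := (size alpha).
Local Notation ps := (psum alpha).

Lemma psumS k : ps k.+1 = ps k + nth 0 alpha k.
Proof. by rewrite /psum big_ord_recr. Qed.

Lemma psum0 : ps 0 = 0.
Proof. by rewrite /psum big_ord0. Qed.

Lemma psum_ge i : 0 < i -> nth 0 alpha 0 <= ps i.
Proof. by case: i => // i _; rewrite /psum big_ord_recl leq_addr. Qed.

Lemma head2 : 2 <= nth 0 alpha 0.
Proof. by case: hfp => _ _; case: alpha. Qed.

Lemma psum_t : ps t = n.+1.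
Proof.
have h : 0 < ps t by apply: leq_trans (psum_ge _) => //; [exact: leq_trans head2 | case: hfp => ? _ _ _; lia].
rewrite /fsize (big_nth 0) big_mkord prednK //.

Qed.

Lemma psum_rev i : i <= t -> ps (t - i) + ps i = n.+1.
Proof.
rewrite -psum_t; elim: i => [|i IH] hi; first by rewrite subn0 psum0 addn0.
have e : t - i = (t - i.+1).+1 by lia.
have hp : nth 0 alpha i = nth 0 alpha (t - 1 - i) := hpal hi.
move: (IH (ltnW hi)); rewrite e psumS psumS hp.
have -> : t - 1 - i = t - i.+1 by lia.
lia.
Qed.

Lemma psum_le i : i <= t -> ps i <= n.+1.
Proof. by move=> hi; rewrite -(psum_rev hi) leq_addl. Qed.

Lemma up0 : up alpha 0.
Proof.
rewrite /up (@eq_in_count _ _ pred0) ?count_pred0 // => i.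
rewrite mem_iota => /andP[hi _] /=; apply/negbTE; rewrite -ltnNge.
by apply: leq_trans (psum_ge hi); apply: leq_trans head2.
Qed.

Lemma perm_rev_iota m : perm_eq (map (fun k => m - k.+1) (iota 0 m)) (iota 0 m).
Proof.
apply: uniq_perm; last 1 first.
- move=> i; rewrite mem_iota; apply/mapP/idP => [[k] |hi].
    by rewrite mem_iota => hk ->; lia.
  by exists (m - i.+1); rewrite ?mem_iota; lia.
- rewrite map_inj_in_uniq ?iota_uniq // => x y; rewrite !mem_iota; lia.
- exact: iota_uniq.
Qed.

Lemma count_sym j : j <= n ->
  count (fun i => ps i <= n - j) (iota 1 t) + count (fun i => ps i <= j) (iota 1 t) = t.-1.
Proof.
move=> hj.
have ht : 0 < t by case: hfp => ? _ _ _; lia.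
have e1 : count (fun i => ps i <= n - j) (iota 1 t) = count (fun i => j < ps i) (iota 0 t).
  rewrite -[1]/(1 + 0) iotaDl count_map.
  rewrite (@eq_in_count _ _ (preim (fun k => t - k.+1) (fun i => j < ps i))); last first.
    move=> k; rewrite mem_iota /= => hk.
    have h1 := psum_rev (i := k.+1); have h2 := psum_le (i := k.+1); rewrite add1n.
    apply/idP/idP; lia.
  by rewrite -count_map; apply: (permP (perm_rev_iota t)).
have e : t = (t.-1).+1 by lia.
have e2 : count (fun i => ps i <= j) (iota 1 t) = count (fun i => ps i <= j) (iota 1 t.-1).
  rewrite (_ : iota 1 t = iota 1 t.-1 ++ iota (1 + t.-1) 1); last by rewrite -iotaD; congr iota; lia.
  rewrite count_cat /=.
  have -> : 1 + t.-1 = t by lia.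
  by rewrite psum_t ltnNge hj /= !addn0.
have e3 : count (fun i => j < ps i) (iota 0 t) = count (fun i => j < ps i) (iota 1 t.-1).
  by rewrite {1}e /= psum0 ltn0 add0n.
rewrite e1 e2 e3 addnC.
rewrite (@eq_count _ (fun i => j < ps i) (predC (fun i => ps i <= j))); last by move=> i /=; rewrite ltnNge.
by rewrite count_predC size_iota.
Qed.

Lemma up_sym j : j <= n -> up alpha (n - j) = up alpha j.
Proof.
move=> hj; rewrite /up; have := count_sym hj.
set a := count _ _; set b := count _ _ => hab.
have -> : a = t.-1 - b by lia.
have ho : odd t.-1 = false by move: hodd; case: (size alpha) => [|s] //=; case: (odd s).
by rewrite oddN //; lia.
Qed.

Lemma upn : up alpha n.
Proof. by rewrite -[n]subn0 up_sym // up0. Qed.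

Lemma up_change j : 1 <= j <= n -> up alpha j.-1 != up alpha j ->
  exists i, [/\ 1 <= i <= t.-1 & ps i = j].
Proof.
move=> hj; rewrite /up => hne.
have : has (fun i => ps i == j) (iota 1 t).
  apply/negPn/negP => hn; move: hne; rewrite (@eq_in_count _ (fun i => ps i <= j.-1) (fun i => ps i <= j)) ?eqxx //.
  move=> i hi; have := hasPn hn i hi => /= /eqP hij; apply/idP/idP; lia.
case/hasP => i; rewrite mem_iota => hi /eqP hij; exists i; split => //.
have : i != t by apply/eqP => eit; move: hij; rewrite eit psum_t; lia.
lia.
Qed.

End Arith.
Lemma lin_seg (f : nat -> rat) (c : rat) (p q : nat) : p < q -> f p = c -> f q = c ->
  (forall k, p < k < q -> (f k.-1 + f k.+1 = f k *+ 2)%R) ->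
  forall k, p <= k <= q -> f k = c.
Proof.
move=> pq fp fq hl.
pose d := (f p.+1 - f p)%R.
have c1 : forall m, p + m < q -> (f (p + m)%N.+1 - f (p + m)%N = d)%R.
  elim=> [|m IH] hm; first by rewrite addn0.
  have hh : p < p + m.+1 < q by lia.
  have h := hl (p + m.+1) hh.
  have e1 : (p + m.+1).-1 = p + m by lia.
  have e2 : (p + m).+1 = p + m.+1 by lia.
  rewrite e1 mulr2n in h; have := IH (ltac:(lia)); rewrite e2 => e; lra.
have c2 : forall m, p + m <= q -> f (p + m) = (c + d *+ m)%R.
  elim=> [|m IH] hm; first by rewrite addn0 fp mulr0n addr0.
  have := c1 m (ltac:(lia)); rewrite IH; last by lia.
  rewrite addnS mulrS => e; lra.
have hd : d = 0%R.
  have := c2 (q - p) (ltac:(lia)); rewrite subnKC ?fq; last by lia.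
  move=> /eqP; rewrite -subr_eq0 opprD addrA subrr add0r oppr_eq0 mulrn_eq0.
  by case/orP => [/eqP|/eqP //]; lia.
move=> k hk; have := c2 (k - p) (ltac:(lia)); rewrite subnKC; last by lia.
by rewrite hd mul0rn addr0.
Qed.

Lemma lin_all (f : nat -> rat) (c : rat) (N0 : nat) (B : pred nat) :
  f 0 = c -> f N0 = c -> (forall j, 0 < j < N0 -> B j -> f j = c) ->
  (forall j, 0 < j < N0 -> ~~ B j -> (f j.-1 + f j.+1 = f j *+ 2)%R) ->
  forall j, j <= N0 -> f j = c.
Proof.
move=> f0 fN hB hl; elim=> [//|j IH] hj.
have [eN|nN] := eqVneq j.+1 N0; first by rewrite eN.
have [b|nb] := boolP (B j.+1); first by apply: hB => //; lia.
have ex : exists m, [&& j.+1 <= m, m <= N0 & (m == N0) || B m] by exists N0; rewrite hj eqxx leqnn.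
case: (ex_minnP ex) => q /and3P[q1 q2 q3] qmin.
apply: (@lin_seg f c j q) => //.
- by apply: IH; lia.
- have [->//|qN] := eqVneq q N0.
  move: q3; rewrite (negbTE qN) /= => bq; apply: hB => //.
  move/eqP: qN; lia.
- move=> k hk; apply: hl; first by lia.
  apply/negP => bk.
  have := qmin k; rewrite bk orbT.
  have [ek|nek] := eqVneq k j.+1; first by move: nb; rewrite -ek bk.
  move=> /(_ _); lia.
- by lia.
Qed.
Section Orbit.
Variable alpha : seq nat.
Hypothesis hfp : fence_params alpha.
Hypothesis hpal : palindromic alpha.
Hypothesis hodd : odd (size alpha).
Variable I : {set 'I_(fsize alpha)}.
Hypothesis iI : is_ideal alpha I.
Local Notation n := (fsize alpha).
Local Notation t := (size alpha).
Local Notation ps := (psum alpha).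
Local Notation T := 'I_(fsize alpha).
Local Notation cov := (cov alpha).
Local Notation up := (up alpha).
Local Notation rho := (rowmotion alpha).
Local Notation M := (min_compl alpha).
Local Notation O := (rorbit alpha I).
Local Notation NN := (#|rorbit alpha I|%:R : rat).
Implicit Types (x y : T).

Definition S p : rat := (\sum_(J in O) hatchi alpha p J)%R.
Definition Sx p : rat := if p == 0 then NN else S p.
Definition SM x : rat := (\sum_(J in O) (x \in M J)%:R)%R.
Definition C p : rat := (\sum_(J in O) chi alpha p J)%R.

Lemma UN_sum x w : (forall y, cov x y = (val y == w)) -> S x.+1 = (SM x + S w.+1)%R.
Proof.
move=> hc; rewrite /S -(sum_rho (hatchi alpha x.+1) iI) -(sum_rho (hatchi alpha w.+1) iI) /SM -big_split.
by apply: eq_bigr => J _; apply: UNr.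
Qed.

Lemma LN1_sum x w : w < n -> (forall y, cov y x = (val y == w)) -> SM x = (S w.+1 - S x.+1)%R.
Proof.
move=> hw hc; rewrite /SM /S -sumrB; apply: eq_bigr => J hJ.
by apply: LN1 => //; apply: orbit_ideal iI hJ.
Qed.

Lemma LN0_sum x : (forall y, cov y x = false) -> SM x = (NN - S x.+1)%R.
Proof.
move=> hc; rewrite /SM /S (eq_bigr (fun J => 1 - hatchi alpha x.+1 J)%R); last by move=> J _; apply: LN0.
by rewrite sumrB sumr_const.
Qed.

Lemma C_M x : C x.+1 = SM x.
Proof.
rewrite /C -(sum_rho (chi alpha x.+1) iI); apply: eq_bigr => J _; exact: chi_rho.
Qed.

Lemma C_peak x : (forall y, cov x y = false) -> C x.+1 = S x.+1.
Proof. by move=> hc; apply: eq_bigr => J _; apply: chi_peak. Qed.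

Lemma cov_upper x y : cov x y = ((val y == x.+1) && up x.+1) || ((x == (val y).+1 :> nat) && ~~ up x).
Proof. by rewrite covP; case: (eqVneq (x : nat) (val y).+1) => [->|]. Qed.

Lemma cov_lower x y : cov y x = ((x == (val y).+1 :> nat) && up x) || ((val y == x.+1) && ~~ up x.+1).
Proof. by rewrite covP; case: (eqVneq (x : nat) (val y).+1) => [->|]. Qed.

Lemma SxS p : Sx p.+1 = S p.+1.
Proof. by []. Qed.

Lemma TT_rel x : up x -> up x.+1 ->
  (Sx x + Sx x.+2 = Sx x.+1 *+ 2)%R /\ C x.+1 = (Sx x - Sx x.+1)%R.
Proof.
move=> h1 h2.
have hu : forall y, cov x y = (val y == x.+1) by move=> y; rewrite cov_upper h1 h2 andbT andbF orbF.
have eS := UN_sum hu.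
have eM : SM x = (Sx x - Sx x.+1)%R.
  case: (posnP x) => [x0|xp].
    rewrite LN0_sum; last by move=> y; rewrite cov_lower h2 x0 andbF orbF.
    by rewrite /Sx x0.
  rewrite (@LN1_sum x x.-1) ?SxS; last first.
  - by move=> y; rewrite cov_lower h1 h2 andbT andbF orbF; apply/eqP/eqP; lia.
  - by have := ltn_ord x; lia.
  by rewrite prednK // /Sx; case: (nat_of_ord x) xp.
rewrite C_M eM; split => //.
move: eS eM; rewrite !SxS => eS eM; rewrite mulr2n; lra.
Qed.

Lemma FF_rel x : ~~ up x -> ~~ up x.+1 ->
  (Sx x + Sx x.+2 = Sx x.+1 *+ 2)%R /\ C x.+1 = (Sx x.+2 - Sx x.+1)%R.
Proof.
move=> h1 h2.
have xp : 0 < x by case: (posnP x) h1 => [->|//]; rewrite up0.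
have xn : x.+1 < n.
  have := ltn_ord x; rewrite leq_eqVlt => /orP[/eqP e|//].
  by move: h2; rewrite e upn.
have hu : forall y, cov x y = (val y == x.-1) by move=> y; rewrite cov_upper (negbTE h2) h1 andbT andbF /=; apply/eqP/eqP; lia.
have eS := UN_sum hu.
have hl : forall y, cov y x = (val y == x.+1) by move=> y; rewrite cov_lower (negbTE h1) h2 andbT andbF.
have eM := LN1_sum xn hl.
rewrite prednK // in eS.
have ex : Sx x = S x by rewrite /Sx; case: (nat_of_ord x) xp.
rewrite C_M eM !SxS ex; split => //.
rewrite mulr2n; lra.
Qed.

Lemma peak_rel x : up x -> ~~ up x.+1 -> C x.+1 = Sx x.+1.
Proof. by move=> h1 h2; rewrite C_peak // => y; rewrite cov_upper (negbTE h2) h1 !andbF. Qed.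

Lemma valley_rel x : ~~ up x -> up x.+1 -> C x.+1 = (NN - Sx x.+1)%R.
Proof. by move=> h1 h2; rewrite C_M LN0_sum // => y; rewrite cov_lower (negbTE h1) h2 !andbF. Qed.

Lemma lin_at x : up x = up x.+1 -> (Sx x + Sx x.+2 = Sx x.+1 *+ 2)%R.
Proof.
case: (boolP (up x)) => h1 h2.
  have h2' : up x.+1 by rewrite -h2.
  exact: (TT_rel h1 h2').1.
have h2' : ~~ up x.+1 by rewrite -h2.
exact: (FF_rel h1 h2').1.
Qed.

Lemma S_big : S n.+1 = 0%R.
Proof. by apply: big1 => J _; rewrite hatchiE hb_big. Qed.

Lemma lin_nat j : 0 < j <= n -> up j.-1 = up j -> (Sx j.-1 + Sx j.+1 = Sx j *+ 2)%R.
Proof.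
move=> hj e; have h : j.-1 < n by lia.
have := lin_at (x := Ordinal h) => /=.
have -> : j.-1.+1 = j by lia.
by apply.
Qed.

Lemma f_const : (forall i, 1 <= i <= t.-1 -> (S (ps i) + S (ps (t - i)%N))%R = NN) ->
  forall j, j <= n.+1 -> (Sx j + Sx (n.+1 - j)%N)%R = NN.
Proof.
move=> hyp.
apply: (@lin_all (fun j => Sx j + Sx (n.+1 - j)%N)%R NN n.+1 (fun j => up j.-1 != up j)).
- by rewrite /= subn0 SxS S_big addr0.
- by rewrite /= subnn SxS S_big add0r.
- move=> j hj /(up_change hfp hodd) [|i [hi e]]; first by lia.
  have hi' : i <= t by lia.
  have e2 : ps (t - i) = n.+1 - j by have := psum_rev hfp hpal hodd hi'; lia.
  rewrite /= -e2 -e -(hyp i hi) /Sx.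
  have -> : (ps i == 0) = false by apply/negbTE; lia.
  by have -> : (ps (t - i) == 0) = false by apply/negbTE; lia.
- move=> j hj /negPn/eqP e.
  have l1 := @lin_nat j (ltac:(lia)) e.
  have e' : up (n.+1 - j).-1 = up (n.+1 - j).
    have -> : (n.+1 - j).-1 = n - j by lia.
    have -> : n.+1 - j = n - j.-1 by lia.
    by rewrite !(up_sym hfp hpal hodd) //; lia.
  have l2 := @lin_nat (n.+1 - j) (ltac:(lia)) e'.
  have -> : n.+1 - j.-1 = (n.+1 - j).+1 by lia.
  have -> : n.+1 - j.+1 = (n.+1 - j).-1 by lia.
  rewrite mulr2n; rewrite mulr2n in l1 l2; lra.
Qed.

Lemma chi_sym k : 1 <= k <= n -> (forall j, j <= n.+1 -> (Sx j + Sx (n.+1 - j)%N)%R = NN) ->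
  C k = C (n.+1 - k).
Proof.
move=> hk F.
have [a ea] : exists a, k = a.+1 by exists k.-1; lia.
subst k.
have h1 : a < n by lia.
have h2 : n - a.+1 < n by lia.
have F0 := F a (ltac:(lia)).
have F1 := F a.+1 (ltac:(lia)).
have -> : n.+1 - a.+1 = (n - a.+1).+1 by lia.
have e0 : n.+1 - a = (n - a.+1).+2 by lia.
rewrite e0 in F0; rewrite subSS in F1.
have e1 : n - a = (n - a.+1).+1 by lia.
rewrite e1 in F1.
have u1 : up (n - a.+1) = up a.+1 by rewrite (up_sym hfp hpal hodd) //; lia.
have u2 : up (n - a.+1).+1 = up a by rewrite -e1 (up_sym hfp hpal hodd) //; lia.
case: (boolP (up a)) => ua; case: (boolP (up a.+1)) => ub.
- have /= [l c1] := TT_rel (x := Ordinal h1) ua ub.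
  have /= [l' c2] := TT_rel (x := Ordinal h2) (ltac:(by rewrite /= u1)) (ltac:(by rewrite /= u2)).
  rewrite c1 c2; rewrite mulr2n in l l'; lra.
- have /= c1 := peak_rel (x := Ordinal h1) ua ub.
  have /= c2 := valley_rel (x := Ordinal h2) (ltac:(by rewrite /= u1)) (ltac:(by rewrite /= u2)).
  rewrite c1 c2; lra.
- have /= c1 := valley_rel (x := Ordinal h1) ua ub.
  have /= c2 := peak_rel (x := Ordinal h2) (ltac:(by rewrite /= u1)) (ltac:(by rewrite /= u2)).
  rewrite c1 c2; lra.
- have /= [l c1] := FF_rel (x := Ordinal h1) ua ub.
  have /= [l' c2] := FF_rel (x := Ordinal h2) (ltac:(by rewrite /= u1)) (ltac:(by rewrite /= u2)).
  rewrite c1 c2; rewrite mulr2n in l l'; lra.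
Qed.

Lemma NN_neq0 : NN != 0%R.
Proof.
rewrite pnatr_eq0 -lt0n; apply/card_gt0P; exists I; exact: I_in_orbit.
Qed.

End Orbit.

Local Open Scope ring_scope.

Theorem theorem5p10 (alpha : seq nat) :
  fence_params alpha -> palindromic alpha -> odd (size alpha) ->
  (forall i : nat, (1 <= i <= (size alpha).-1)%N ->
     mesic alpha (fun I => hatchi alpha (psum alpha i) I
                     + hatchi alpha (psum alpha (size alpha - i)) I) 1) ->
  (forall k : nat, (1 <= k <= fsize alpha)%N ->
     mesic alpha (fun I => hatchi alpha k I + hatchi alpha (fsize alpha - k + 1) I) 1) /\
  (forall k : nat, (1 <= k <= fsize alpha)%N ->
     mesic alpha (fun I => chi alpha k I - chi alpha (fsize alpha - k + 1) I) 0).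
Proof.
move=> hfp hpal hodd hyp.
have key : forall I, is_ideal alpha I ->
    forall j, (j <= (fsize alpha).+1)%N -> (Sx I j + Sx I ((fsize alpha).+1 - j)%N)%R = (#|rorbit alpha I|%:R : rat).
  move=> I iI; apply: f_const => // i hi.
  have := hyp i hi I iI; rewrite big_split /= -/(S _ _) -/(S _ _) => e.
  have nz := NN_neq0 I.
  by move/(congr1 (fun z => z * #|rorbit alpha I|%:R)): e; rewrite mul1r (mulfVK nz).
have e1 : forall k, (k <= fsize alpha)%N -> (fsize alpha - k + 1 = (fsize alpha).+1 - k)%N by move=> k hk; lia.
split => k hk I iI; have nz := NN_neq0 I; rewrite e1; try lia.
  rewrite big_split /= -/(S _ _) -/(S _ _).
  have := key I iI k (ltac:(lia)); rewrite /Sx.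
  have -> : (k == 0) = false by apply/negbTE; lia.
  have -> : (((fsize alpha).+1 - k)%N == 0%N) = false by apply/negbTE; lia.
  by move=> ->; rewrite divff.
rewrite sumrB -/(C _ _) -/(C _ _) (chi_sym hfp hpal hodd iI hk (key I iI)).
by rewrite subrr mul0r.
Qed.
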